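(* Fix an angle $0<\theta\le\pi/8$ and, for an angle $\alpha$, let $\phi_\alpha=\cos(\alpha)|0\rangle+\sin(\alpha)|1\rangle$. Define $\phi_{0,0}=\phi_{-\theta}$, $\phi_{0,1}=\phi_{\theta}$, $\phi_{1,0}=\phi_{\pi/2-\theta}$, $\phi_{1,1}=\phi_{\pi/2+\theta}$. Consider the bit escrow protocol with the reveal challenge: in the deposit step an honest Alice with bit $b$ picks a uniformly random $x\in\{0,1\}$ and sends the qubit $\phi_{b,x}$ to Bob; in the reveal step Alice sends the classical bits $b$ and $x$ to Bob, who measures the deposited qubit in the basis $\{\phi_{0,x},\phi_{1,x}\}$ and sets his result $r_B=b$ if the outcome is $\phi_{b,x}$ and $r_B=err$ otherwise. Then for every $\epsilon\ge 0$ this protocol is $\left(\epsilon,\ \gamma=\frac{2\sqrt{\epsilon}}{\cos(2\theta)}\right)$ binding.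
   Context: Binding is defined for two-step protocols of the following form. Deposit: Alice prepares an arbitrary joint state $\psi_{AB}$ of quantum registers $A$ and $B$ (here $B$ is one qubit) and sends $B$ to Bob, keeping $A$. Reveal: Alice and Bob communicate, Bob follows the protocol honestly and Alice is arbitrary; Alice has one reveal strategy (the ''zero strategy'') which she uses if she wants to bias the result towards $0$ and another (the ''one strategy'') for biasing towards $1$, both starting from the same deposited state. Bob decides on a result $r_B\in\{0,1,err\}$. Let $p_0$ (resp. $p_1$) be the probability that, under the zero strategy, Alice claims the bit is $0$ (resp. $1$), and $p_{err}$ the probability that $r_B=err$ under the zero strategy; define $q_0,q_1,q_{err}$ likewise for the one strategy. The protocol is $(\epsilon,\gamma)$ binding if, whenever Bob is honest, for any strategy of Alice, $p_{err}\le\epsilon$ and $q_{err}\le\epsilon$ imply $|p_0-q_0|\le\gamma$ and $|p_1-q_1|\le\gamma$. Classical bits that Alice sends as qubits are measured by Bob in the computational basis. *)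

(* Defs.v *)
From mathcomp Require Import all_boot all_algebra complex mxtens.
From mathcomp Require Import reals trigo.
Set Implicit Arguments. Unset Strict Implicit. Unset Printing Implicit Defensive.
Import GRing.Theory Num.Theory.
Local Open Scope ring_scope.

Section Defs.
Variable R : realType.
Notation C := R[i].

Definition adjmx m n (A : 'M[C]_(m, n)) : 'M[C]_(n, m) := (map_mx Num.conj A)^T.

(* positive semidefinite (over C this entails Hermitian) *)
Definition psd m (A : 'M[C]_m) : Prop :=
  forall v : 'cV[C]_m, 0 <= (adjmx v *m A *m v) 0 0.

Definition density m (rho : 'M[C]_m) : Prop := psd rho /\ \tr rho = 1.

Definition povm4 n (M : bool -> bool -> 'M[C]_n) : Prop :=
  (forall b x, psd (M b x)) /\ \sum_(b : bool) \sum_(x : bool) M b x = 1%:M.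

Definition phi_ang (a : R) : 'cV[C]_2 :=
  \col_(i < 2) (if i == ord0 then ((cos a)%:C)%C else ((sin a)%:C)%C).

Definition proj (v : 'cV[C]_2) : 'M[C]_2 := v *m adjmx v.

Definition phi_bx (theta : R) (b x : bool) : 'cV[C]_2 :=
  match b, x with
  | false, false => phi_ang (- theta)
  | false, true  => phi_ang theta
  | true,  false => phi_ang (pi / 2 - theta)
  | true,  true  => phi_ang (pi / 2 + theta)
  end.

Definition prob m (rho : 'M[C]_m) (E : 'M[C]_m) : R := complex.Re (\tr (E *m rho)).

(* Joint state rho on A (x) B (A of dimension n, B one qubit).  Alice's reveal
   strategy is a POVM M on A whose outcome (b, x) are the classical bits she
   sends; Bob measures B in the basis {phi_{0,x}, phi_{1,x}}. *)

Definition claim_prob n (rho : 'M[C]_(n * 2)) (M : bool -> bool -> 'M[C]_n)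
  (b : bool) : R :=
  \sum_(x : bool) prob rho (M b x *t (1%:M : 'M[C]_2)).

(* probability that Bob's result is err: Alice sent (b, x) and Bob obtained
   phi_{~b, x} *)
Definition err_prob (theta : R) n (rho : 'M[C]_(n * 2))
  (M : bool -> bool -> 'M[C]_n) : R :=
  \sum_(b : bool) \sum_(x : bool) prob rho (M b x *t proj (phi_bx theta (~~ b) x)).

Definition binding (theta eps gamma : R) : Prop :=
  forall (n : nat) (rho : 'M[C]_(n * 2)) (M0 M1 : bool -> bool -> 'M[C]_n),
    density rho -> povm4 M0 -> povm4 M1 ->
    err_prob theta rho M0 <= eps -> err_prob theta rho M1 <= eps ->
    `|claim_prob rho M0 false - claim_prob rho M1 false| <= gamma /\
    `|claim_prob rho M0 true - claim_prob rho M1 true| <= gamma.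

End Defs.

(* Main.v *)
Require Import Defs.
From mathcomp Require Import all_boot all_algebra complex mxtens.
From mathcomp Require Import reals trigo.
From mathcomp Require Import spectral sesquilinear ring lra.
Import GRing.Theory Num.Theory.
Local Open Scope ring_scope.

Set Implicit Arguments. Unset Strict Implicit. Unset Printing Implicit Defensive.

Section P1.
Variable R : realType.
Notation C := R[i].

Definition qf m (B : 'M[C]_m) (u v : 'cV[C]_m) : C := (adjmx u *m B *m v) 0 0.

Lemma adjmxD m n (A B : 'M[C]_(m, n)) : adjmx (A + B) = adjmx A + adjmx B.
Proof. by apply/matrixP=> i j; rewrite !mxE rmorphD. Qed.

Lemma adjmxZ m n a (A : 'M[C]_(m, n)) : adjmx (a *: A) = Num.conj a *: adjmx A.
Proof. by apply/matrixP=> i j; rewrite !mxE rmorphM. Qed.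

Lemma qf_comb m (B : 'M[C]_m) u w a :
  qf B (u + a *: w) (u + a *: w) =
  qf B u u + a * qf B u w + Num.conj a * qf B w u + Num.conj a * a * qf B w w.
Proof.
rewrite /qf adjmxD adjmxZ !mulmxDl !mulmxDr -!scalemxAl -!scalemxAr.
rewrite !mxE; ring.
Qed.

Lemma qf_delta m (B : 'M[C]_m) i j : qf B (delta_mx i 0) (delta_mx j 0) = B i j.
Proof.
rewrite /qf mxE (bigD1 j) //= big1 ?addr0; last first.
  by move=> k /negPf nk; rewrite [delta_mx j 0 k 0]mxE nk mulr0.
rewrite [delta_mx j 0 j 0]mxE !eqxx mulr1 mxE (bigD1 i) //= big1 ?addr0; last first.
  by move=> k /negPf nk; rewrite !mxE nk /= rmorph0 mul0r.
by rewrite !mxE !eqxx /= rmorph1 mul1r.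
Qed.

Lemma psd_herm m (B : 'M[C]_m) : psd B -> forall i j, B j i = Num.conj (B i j).
Proof.
move=> hB i j.
have real_of v : qf B v v \is Num.real by apply: ger0_real; apply: hB.
have h1 := real_of (delta_mx i 0 + 1 *: delta_mx j 0).
have h2 := real_of (delta_mx i 0 + 'i *: delta_mx j 0).
rewrite qf_comb !qf_delta in h1; rewrite qf_comb !qf_delta in h2.
have ri := real_of (delta_mx i 0); have rj := real_of (delta_mx j 0).
rewrite !qf_delta in ri rj.
move/CrealP: h1; move/CrealP: h2; move/CrealP: ri; move/CrealP: rj.
rewrite !rmorphD !rmorphM /= !conjCK conjC1 conjCi.
set x := B i j; set y := B j i; set a := B i i; set b := B j j.
move=> eb ea; rewrite ea eb => /eqP; rewrite -subr_eq0 => /eqP e2 /eqP.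
rewrite -subr_eq0 => /eqP e1.
have H : 2 * 'i * (Num.conj y - x) = 0.
  rewrite -[RHS](_ : 'i * 0 + 0 = 0); last by rewrite mulr0 addr0.
  rewrite -{1}e1 -e2. ring.
move/eqP: H; rewrite !mulf_eq0 pnatr_eq0 /= (negPf (neq0Ci _)) /= subr_eq0 => /eqP <-.
by rewrite conjCK.
Qed.

Local Open Scope sesquilinear_scope.

Lemma psd_hermsym m (B : 'M[C]_m) : psd B -> B \is hermsymmx.
Proof.
move=> hB; apply/is_hermitianmxP; rewrite expr0 scale1r.
by apply/matrixP=> i j; rewrite !mxE (psd_herm hB).
Qed.

Lemma qf_rowE m (X P : 'M[C]_m) k :
  qf X ((row k P)^t*) ((row k P)^t*) = (P *m X *m P^t*) k k.
Proof.
rewrite /qf /adjmx !mxE; apply: eq_bigr => l _; rewrite !mxE.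
congr (_ * _); apply: eq_bigr => j _; rewrite !mxE ?conjCK //.
Qed.

Lemma psd_tr m (A B : 'M[C]_m) : psd A -> psd B -> 0 <= \tr (A *m B).
Proof.
move=> hA hB.
have /hermitian_normalmx /orthomx_spectralP eB := psd_hermsym hB.
set P := spectralmx B in eB; set d := spectral_diag B in eB.
have uP : P \is unitarymx by apply: spectral_unitarymx.
have PP : P *m P^t* = 1%:M by apply/unitarymxP.
rewrite invmx_unitary // in eB.
have hd : forall k, d 0 k = (P *m B *m P^t*) k k.
  move=> k; rewrite [in RHS]eB !mulmxA PP mul1mx -!mulmxA PP mulmx1.
  by rewrite mxE eqxx mulr1n.
rewrite eB mulmxA mxtrace_mulC !mulmxA /mxtrace.
apply: sumr_ge0 => k _; rewrite mul_mx_diag mxE hd -!qf_rowE.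
by apply: mulr_ge0; [apply: hA | apply: hB].
Qed.


Lemma adjmxK m n (A : 'M[C]_(m, n)) : adjmx (adjmx A) = A.
Proof. by apply/matrixP=> i j; rewrite !mxE conjCK. Qed.

Lemma adjmx_mul m n p (A : 'M[C]_(m, n)) (B : 'M[C]_(n, p)) :
  adjmx (A *m B) = adjmx B *m adjmx A.
Proof. by rewrite /adjmx map_mxM trmx_mul. Qed.

Lemma psd_conj m p (K : 'M[C]_(m, p)) N : psd N -> psd (K *m N *m adjmx K).
Proof.
move=> hN v; have := hN (adjmx K *m v).
by rewrite adjmx_mul adjmxK !mulmxA.
Qed.

Lemma sum_delta m (a : 'I_m) (F : 'I_m -> C) :
  \sum_i ((a == i)%:R * F i) = F a.
Proof.
rewrite (bigD1 a) //= eqxx mul1r big1 ?addr0 // => i /negPf ni.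
by rewrite eq_sym ni mul0r.
Qed.

Definition Kw n (w : 'cV[C]_2) : 'M[C]_(n * 2, n) :=
  \matrix_(k, i) (((mxtens_unindex k).1 == i)%:R * w (mxtens_unindex k).2 0).

Lemma tens_proj_fact n (M : 'M[C]_n) w :
  M *t proj w = Kw n w *m M *m adjmx (Kw n w).
Proof.
apply/matrixP=> k l; rewrite !mxE.
under eq_bigr => j _ do rewrite !mxE.
rewrite big_ord1.
under [RHS]eq_bigr => j _ do rewrite !mxE.
under [RHS]eq_bigr => j _ do under eq_bigr => i _ do rewrite !mxE -mulrA.
under [RHS]eq_bigr => j _ do rewrite sum_delta rmorphM rmorph_nat mulrCA.
rewrite sum_delta; ring.
Qed.

Lemma psd_tens_proj n (M : 'M[C]_n) w : psd M -> psd (M *t proj w).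
Proof. by move=> hM; rewrite tens_proj_fact; apply: psd_conj. Qed.

End P1.

Section P2.
Variable R : realType.
Notation C := R[i].

Definition vec2 (c s : R) : 'cV[C]_2 :=
  \col_(i < 2) (if i == ord0 then (c%:C)%C else (s%:C)%C).

Lemma c1 : (1 : C) = (1 : R)%:C%C. Proof. by []. Qed.
Lemma c0 : (0 : C) = (0 : R)%:C%C. Proof. by []. Qed.

Definition Xm (p u : 'cV[C]_2) : 'M[C]_2 := p *m adjmx u + u *m adjmx p.

Lemma proj_vec2 c s : proj (vec2 c s) =
  \matrix_(i, j) (if i == ord0 then if j == ord0 then (c * c)%:C%C else (c * s)%:C%C
                  else if j == ord0 then (s * c)%:C%C else (s * s)%:C%C).
Proof.
apply/matrixP => i j; rewrite !mxE big_ord1 !mxE.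
case: (i == ord0); case: (j == ord0); rewrite ?conj_Creal ?rmorphM //;
  by apply/complex_realP; eexists.
Qed.

Lemma ident1 c s e : c ^+ 2 + s ^+ 2 = 1 -> e ^+ 2 = 1 ->
  (1%:M : 'M[C]_2) = proj (vec2 c s) + proj (vec2 (- e * s) (e * c)).
Proof.
move=> hcs he.
have [->|->] : e = 1 \/ e = -1 by move/eqP: he; rewrite sqrf_eq1 => /orP[]/eqP; auto.
all: rewrite !proj_vec2; apply/matrixP => i j; rewrite !mxE.
all: case: i => [[|[|//]]] Hi; case: j => [[|[|//]]] Hj /=.
all: rewrite ?mulr1n ?mulr0n ?c1 ?c0 -?rmorphD; apply: congr1; nra.
Qed.

Lemma outer_vec2 a b c d : vec2 a b *m adjmx (vec2 c d) =
  \matrix_(i, j) (if i == ord0 then if j == ord0 then (a * c)%:C%C else (a * d)%:C%C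
                  else if j == ord0 then (b * c)%:C%C else (b * d)%:C%C).
Proof.
apply/matrixP => i j; rewrite !mxE big_ord1 !mxE.
case: (i == ord0); case: (j == ord0); rewrite ?conj_Creal ?rmorphM //;
  by apply/complex_realP; eexists.
Qed.

Lemma vec2_comb l m a b c d :
  l%:C%C *: vec2 a b + m%:C%C *: vec2 c d = vec2 (l * a + m * c) (l * b + m * d).
Proof.
apply/matrixP => i j; rewrite !mxE.
by case: (i == ord0); rewrite -!rmorphM -rmorphD.
Qed.

Definition Zm : 'M[C]_2 :=
  \matrix_(i, j) (if i == j then (if i == ord0 then 1 else -1) else 0).

Lemma identZ c s e : c ^+ 2 + s ^+ 2 = 1 -> e ^+ 2 = 1 ->
  Zm = (c ^+ 2 - s ^+ 2)%:C%C *: 1%:M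
       - (2 * (c ^+ 2 - s ^+ 2))%:C%C *: proj (vec2 (- e * s) (e * c))
       + (- 2 * e * c * s)%:C%C *: Xm (vec2 c s) (vec2 (- e * s) (e * c)).
Proof.
move=> hcs he.
have [->|->] : e = 1 \/ e = -1 by move/eqP: he; rewrite sqrf_eq1 => /orP[]/eqP; auto.
all: rewrite /Xm /proj !outer_vec2; apply/matrixP => i j; rewrite !mxE.
all: case: i => [[|[|//]]] Hi; case: j => [[|[|//]]] Hj /=.
all: rewrite ?mulr1n ?mulr0n ?mulr1 ?mulr0 ?c1 ?c0 -?rmorphN -?rmorphM -?rmorphD -?rmorphB -?rmorphM.
all: apply/eqP; rewrite eq_complex /= addr0 eqxx andbT; apply/eqP; nra.
Qed.

Lemma ident_comb c s e l m :
  proj (l%:C%C *: vec2 c s + m%:C%C *: vec2 (- e * s) (e * c)) =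
  (l * l)%:C%C *: proj (vec2 c s) + (l * m)%:C%C *: Xm (vec2 c s) (vec2 (- e * s) (e * c))
  + (m * m)%:C%C *: proj (vec2 (- e * s) (e * c)).
Proof.
rewrite vec2_comb /Xm /proj !outer_vec2; apply/matrixP => i j; rewrite !mxE.
case: (i == ord0); case: (j == ord0);
rewrite -?rmorphN -?rmorphM -?rmorphD -?rmorphB -?rmorphM;
  apply/eqP; rewrite eq_complex /=; apply/andP; split; apply/eqP; ring.
Qed.

End P2.

Section P3.
Variable R : realType.
Notation C := R[i].

Lemma ReD (x y : C) : complex.Re (x + y) = complex.Re x + complex.Re y.
Proof. by case: x; case: y. Qed.

Lemma ReRM (r : R) (x : C) : complex.Re (r%:C%C * x) = r * complex.Re x.
Proof. case: x => a b /=. ring. Qed.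

Lemma probD m (rho A B : 'M[C]_m) : prob rho (A + B) = prob rho A + prob rho B.
Proof. by rewrite /prob mulmxDl mxtraceD ReD. Qed.

Lemma prob0 m (rho : 'M[C]_m) : prob rho 0 = 0.
Proof. by rewrite /prob mul0mx mxtrace0. Qed.

Lemma probZ m (rho A : 'M[C]_m) r : prob rho (r%:C%C *: A) = r * prob rho A.
Proof. by rewrite /prob -scalemxAl mxtraceZ ReRM. Qed.

Lemma probN m (rho A : 'M[C]_m) : prob rho (- A) = - prob rho A.
Proof.
rewrite -scaleN1r (_ : -1 = (-1 : R)%:C%C) ?probZ ?mulN1r //.
by rewrite rmorphN rmorph1.
Qed.

Lemma prob_sum m (rho : 'M[C]_m) (I : finType) (F : I -> 'M[C]_m) :
  prob rho (\sum_i F i) = \sum_i prob rho (F i).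
Proof. exact: (big_morph _ (probD rho) (prob0 rho)). Qed.

Lemma tensmxDr m n p q (A : 'M[C]_(m, n)) (B D : 'M[C]_(p, q)) :
  A *t (B + D) = A *t B + A *t D.
Proof. by apply/matrixP=> i j; rewrite !mxE mulrDr. Qed.

Lemma tensmxDl m n p q (A D : 'M[C]_(m, n)) (B : 'M[C]_(p, q)) :
  (A + D) *t B = A *t B + D *t B.
Proof. by apply/matrixP=> i j; rewrite !mxE mulrDl. Qed.

Lemma tensmxZr m n p q (A : 'M[C]_(m, n)) (B : 'M[C]_(p, q)) a :
  A *t (a *: B) = a *: (A *t B).
Proof. by apply/matrixP=> i j; rewrite !mxE mulrCA. Qed.

Lemma tensmxNr m n p q (A : 'M[C]_(m, n)) (B : 'M[C]_(p, q)) :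
  A *t (- B) = - (A *t B).
Proof. by apply/matrixP=> i j; rewrite !mxE mulrN. Qed.

Lemma tens_suml m n p q (I : finType) (F : I -> 'M[C]_(m, n)) (B : 'M[C]_(p, q)) :
  (\sum_i F i) *t B = \sum_i (F i *t B).
Proof.
apply: (big_morph (fun A => A *t B)) => [A D|]; first exact: tensmxDl.
exact: tens0mx.
Qed.

Lemma tens11 m p : (1%:M : 'M[C]_m) *t (1%:M : 'M[C]_p) = 1%:M.
Proof.
apply/matrixP=> k l.
case: (mxtens_indexP k) => i j; case: (mxtens_indexP l) => i' j'.
rewrite tensmxE !mxE (inj_eq (can_inj (@mxtens_indexK _ _))) xpair_eqE.
by case: (i == i'); case: (j == j'); rewrite /= ?mulr1 ?mul0r ?mulr0.
Qed.

Lemma prob1 m (rho : 'M[C]_m) : density rho -> prob rho 1%:M = 1.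
Proof. by case=> _ tr1; rewrite /prob mul1mx tr1. Qed.

Lemma prob_ge0 n (rho : 'M[C]_(n * 2)) (Mb : 'M[C]_n) w :
  density rho -> psd Mb -> 0 <= prob rho (Mb *t proj w).
Proof.
case=> hrho _ hM; have := psd_tr (psd_tens_proj w hM) hrho.
by rewrite /prob lecE /= => /andP[_].
Qed.

End P3.

Section P4.
Import order.Order.TTheory.
Variable R : realType.
Notation C := R[i].

Lemma disc (a x e : R) : 0 <= a -> 0 <= e ->
  (forall l m, 0 <= l * l * a + l * m * x + m * m * e) -> x ^+ 2 <= 4 * a * e.
Proof.
move=> ha he hq; have [a0|apos] := eqVneq a 0.
  have [x0|xn0] := eqVneq x 0; first by rewrite x0 a0; lra.
  have := hq (- (e + 1) / x) 1; rewrite a0 mulr0 add0r !mul1r mulr1.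
  rewrite divfK //; lra.
have ap : 0 < a by rewrite lt0r apos ha.
have := hq (- x) (2 * a) => h.
have : 0 <= a * (4 * a * e - x ^+ 2) by rewrite mulrBr; nra.
by rewrite pmulr_rge0 // subr_ge0.
Qed.

Lemma kt_lem (c s e : R) : c ^+ 2 + s ^+ 2 = 1 -> e ^+ 2 = 1 ->
  (c ^+ 2 - s ^+ 2) ^+ 2 + (- 2 * e * c * s) ^+ 2 = 1.
Proof.
move=> hcs he.
have -> : (c ^+ 2 - s ^+ 2) ^+ 2 + (- 2 * e * c * s) ^+ 2 =
          (c ^+ 2 + s ^+ 2) ^+ 2 + 4 * c ^+ 2 * s ^+ 2 * (e ^+ 2 - 1) by ring.
by rewrite hcs he subrr mulr0 addr0 expr1n.
Qed.

Lemma final_real (z t a ee xx k tau : R) : k ^+ 2 + tau ^+ 2 = 1 ->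
  xx ^+ 2 <= 4 * a * ee -> t = a + ee -> z = k * t - 2 * k * ee + tau * xx ->
  (z - k * t) ^+ 2 <= 4 * ee * t.
Proof.
move=> kt hx ht ->.
have -> : k * t - 2 * k * ee + tau * xx - k * t = k * (- 2 * ee) + tau * xx by ring.
have cs : (k * (- 2 * ee) + tau * xx) ^+ 2 <= (k ^+ 2 + tau ^+ 2) * ((- 2 * ee) ^+ 2 + xx ^+ 2).
  rewrite -subr_ge0 (_ : _ - _ = (k * xx - tau * (- 2 * ee)) ^+ 2); first exact: sqr_ge0.
  ring.
rewrite kt mul1r in cs.
apply: (le_trans cs); rewrite ht.
rewrite (_ : (- 2 * ee) ^+ 2 = 4 * ee * ee); last by ring.
rewrite (_ : 4 * ee * (a + ee) = 4 * ee * ee + 4 * a * ee); last by ring.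
by rewrite lerD2l.
Qed.

Lemma elem_bound n (rho : 'M[C]_(n * 2)) (Mb : 'M[C]_n) c s e :
  density rho -> psd Mb -> c ^+ 2 + s ^+ 2 = 1 -> e ^+ 2 = 1 ->
  0 <= prob rho (Mb *t proj (vec2 (- e * s) (e * c))) /\
  0 <= prob rho (Mb *t 1%:M) /\
  (prob rho (Mb *t Zm R) - (c ^+ 2 - s ^+ 2) * prob rho (Mb *t 1%:M)) ^+ 2 <=
    4 * prob rho (Mb *t proj (vec2 (- e * s) (e * c))) * prob rho (Mb *t 1%:M).
Proof.
move=> hrho hM hcs he.
set u := vec2 (- e * s) (e * c); set p := vec2 c s.
set t := prob rho (Mb *t 1%:M).
set a := prob rho (Mb *t proj p).
set ee := prob rho (Mb *t proj u).
set xx := prob rho (Mb *t Xm p u).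
have ha : 0 <= a by apply: prob_ge0.
have hee : 0 <= ee by apply: prob_ge0.
have ht : t = a + ee by rewrite /t (ident1 hcs he) tensmxDr probD.
have hz : prob rho (Mb *t Zm R) =
    (c ^+ 2 - s ^+ 2) * t - (2 * (c ^+ 2 - s ^+ 2)) * ee + (- 2 * e * c * s) * xx.
  by rewrite [in LHS](identZ hcs he) !tensmxDr tensmxNr !tensmxZr !probD probN !probZ.
have hq : forall l m, 0 <= l * l * a + l * m * xx + m * m * ee.
  move=> l m; have := prob_ge0 (l%:C%C *: p + m%:C%C *: u) hrho hM.
  by rewrite /p /u ident_comb !tensmxDr !tensmxZr !probD !probZ.
have hx := disc ha hee hq.
split; first exact: hee.
split; first by rewrite ht; apply: addr_ge0.
exact: (final_real (kt_lem hcs he) hx ht hz).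
Qed.
End P4.

Section P5.
Import order.Order.TTheory.
Variable R : realType.
Notation C := R[i].

Lemma abs_bound (d ee t : R) : 0 <= ee -> 0 <= t -> d ^+ 2 <= 4 * ee * t ->
  `|d| <= 2 * (Num.sqrt ee * Num.sqrt t).
Proof.
move=> he ht h.
have E : 4 * ee * t = (2 * (Num.sqrt ee * Num.sqrt t)) ^+ 2.
  by rewrite !exprMn !sqr_sqrtr //; ring.
rewrite E in h; have := ler_wsqrtr h; rewrite !sqrtr_sqr => h'.
apply: (le_trans h'); rewrite ger0_norm //.
by rewrite mulr_ge0 ?mulr_ge0 ?sqrtr_ge0.
Qed.

Lemma cs4 (a1 a2 a3 a4 b1 b2 b3 b4 : R) :
  (a1 * b1 + a2 * b2 + a3 * b3 + a4 * b4) ^+ 2 <=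
  (a1 ^+ 2 + a2 ^+ 2 + a3 ^+ 2 + a4 ^+ 2) * (b1 ^+ 2 + b2 ^+ 2 + b3 ^+ 2 + b4 ^+ 2).
Proof.
rewrite -subr_ge0.
rewrite (_ : _ - _ = (a1 * b2 - a2 * b1) ^+ 2 + (a1 * b3 - a3 * b1) ^+ 2
  + (a1 * b4 - a4 * b1) ^+ 2 + (a2 * b3 - a3 * b2) ^+ 2 + (a2 * b4 - a4 * b2) ^+ 2
  + (a3 * b4 - a4 * b3) ^+ 2); last by ring.
by rewrite !addr_ge0 ?sqr_ge0.
Qed.

Lemma sq_le (x y : R) : 0 <= x -> x <= y -> x ^+ 2 <= y ^+ 2.
Proof. move=> h0 h1; rewrite !expr2; apply: ler_pM => //. Qed.

Lemma sum4 (d1 d2 d3 d4 e1 e2 e3 e4 t1 t2 t3 t4 : R) :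
  0 <= e1 -> 0 <= e2 -> 0 <= e3 -> 0 <= e4 ->
  0 <= t1 -> 0 <= t2 -> 0 <= t3 -> 0 <= t4 ->
  d1 ^+ 2 <= 4 * e1 * t1 -> d2 ^+ 2 <= 4 * e2 * t2 ->
  d3 ^+ 2 <= 4 * e3 * t3 -> d4 ^+ 2 <= 4 * e4 * t4 ->
  (d1 + d2 + d3 + d4) ^+ 2 <= 4 * (e1 + e2 + e3 + e4) * (t1 + t2 + t3 + t4).
Proof.
move=> he1 he2 he3 he4 ht1 ht2 ht3 ht4 h1 h2 h3 h4.
have a1 := abs_bound he1 ht1 h1; have a2 := abs_bound he2 ht2 h2.
have a3 := abs_bound he3 ht3 h3; have a4 := abs_bound he4 ht4 h4.
have hs : `|d1 + d2 + d3 + d4| <= 2 * (Num.sqrt e1 * Num.sqrt t1 + Num.sqrt e2 * Num.sqrt t2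
    + Num.sqrt e3 * Num.sqrt t3 + Num.sqrt e4 * Num.sqrt t4).
  apply: (le_trans (ler_normD _ _)); rewrite !mulrDr !lerD //.
  apply: (le_trans (ler_normD _ _)); rewrite !lerD //.
  apply: (le_trans (ler_normD _ _)); rewrite !lerD //.
have := sq_le (normr_ge0 _) hs; rewrite real_normK ?num_real // => h.
apply: (le_trans h); rewrite exprMn (_ : 2 ^+ 2 = 4); last by ring.
rewrite -mulrA ler_pM2l; last by lra.
have := cs4 (Num.sqrt e1) (Num.sqrt e2) (Num.sqrt e3) (Num.sqrt e4)
  (Num.sqrt t1) (Num.sqrt t2) (Num.sqrt t3) (Num.sqrt t4).
by rewrite !sqr_sqrtr.
Qed.


Lemma phi_vec2 a : phi_ang a = vec2 (cos a) (sin a :> R).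
Proof. by []. Qed.

Lemma cos2 (th : R) : cos (2 * th) = cos th ^+ 2 - sin th ^+ 2.
Proof. by rewrite (_ : 2 * th = th + th) ?cosD ?expr2 //; ring. Qed.

Lemma phi_cases (th : R) b x : exists c s e,
  [/\ c ^+ 2 + s ^+ 2 = 1, e ^+ 2 = 1,
      phi_bx th (~~ b) x = vec2 (- e * s) (e * c) &
      c ^+ 2 - s ^+ 2 = (if b then -1 else 1) * cos (2 * th)].
Proof.
have h1 := cos2Dsin2 th; rewrite cos2.
case: b; case: x => /=; rewrite !phi_vec2.
- exists (- sin th), (cos th), (-1); split.
  + by rewrite sqrrN addrC.
  + by ring.
  + by congr vec2; ring.
  + by ring.
- exists (sin th), (cos th), (-1); split.
  + by rewrite addrC.
  + by ring.
  + by rewrite cosN sinN; congr vec2; ring.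
  + by ring.
- exists (cos th), (sin th), 1; split.
  + by [].
  + by ring.
  + by rewrite (addrC (pi / 2)) cosDpihalf sinDpihalf; congr vec2; ring.
  + by ring.
- exists (cos th), (- sin th), 1; split.
  + by rewrite sqrrN.
  + by ring.
  + rewrite (_ : pi / 2 - th = - (th - pi / 2)); last by ring.
    by rewrite cosN sinN cosBpihalf sinBpihalf; congr vec2; ring.
  + by rewrite sqrrN; ring.
Qed.

Lemma combine (k z1 z2 z3 z4 e1 e2 e3 e4 t1 t2 t3 t4 : R) :
  t1 + t2 + (t3 + t4) = 1 ->
  0 <= e1 -> 0 <= e2 -> 0 <= e3 -> 0 <= e4 ->
  0 <= t1 -> 0 <= t2 -> 0 <= t3 -> 0 <= t4 ->
  (z1 - ((if true then -1 else 1) * k) * t1) ^+ 2 <= 4 * e1 * t1 ->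
  (z2 - ((if true then -1 else 1) * k) * t2) ^+ 2 <= 4 * e2 * t2 ->
  (z3 - ((if false then -1 else 1) * k) * t3) ^+ 2 <= 4 * e3 * t3 ->
  (z4 - ((if false then -1 else 1) * k) * t4) ^+ 2 <= 4 * e4 * t4 ->
  (z1 + z2 + (z3 + z4) - k * (2 * (t3 + t4) - 1)) ^+ 2 <= 4 * (e1 + e2 + (e3 + e4)).
Proof.
move=> ts he1 he2 he3 he4 ht1 ht2 ht3 ht4 h1 h2 h3 h4.
have := sum4 he1 he2 he3 he4 ht1 ht2 ht3 ht4 h1 h2 h3 h4.
rewrite (_ : t1 + t2 + t3 + t4 = 1); last by rewrite -ts; ring.
rewrite mulr1 (_ : e1 + e2 + e3 + e4 = e1 + e2 + (e3 + e4)); last by ring.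
congr (_ <= _); rewrite -[X in 2 * _ - X]ts /=; ring.
Qed.

Lemma sum_bool (F : bool -> R) : \sum_(b : bool) F b = F true + F false.
Proof. by rewrite big_bool. Qed.

Lemma combine' (k : R) (z e t : bool -> bool -> R) :
  \sum_(b : bool) \sum_(x : bool) t b x = 1 ->
  (forall b x, 0 <= e b x /\ 0 <= t b x /\
     (z b x - ((if b then -1 else 1) * k) * t b x) ^+ 2 <= 4 * e b x * t b x) ->
  (\sum_(b : bool) \sum_(x : bool) z b x - k * (2 * (\sum_(x : bool) t false x) - 1)) ^+ 2
    <= 4 * (\sum_(b : bool) \sum_(x : bool) e b x).
Proof.
move=> ts h; rewrite !sum_bool in ts *.
have [e1 [t1 h1]] := h true true; have [e2 [t2 h2]] := h true false.
have [e3 [t3 h3]] := h false true; have [e4 [t4 h4]] := h false false.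
exact: (combine ts e1 e2 e3 e4 t1 t2 t3 t4 h1 h2 h3 h4).
Qed.

Lemma elem_bx (th : R) n (rho : 'M[C]_(n * 2)) (Mb : 'M[C]_n) b x :
  density rho -> psd Mb ->
  0 <= prob rho (Mb *t proj (phi_bx th (~~ b) x)) /\
  0 <= prob rho (Mb *t 1%:M) /\
  (prob rho (Mb *t Zm R) - ((if b then -1 else 1) * cos (2 * th)) * prob rho (Mb *t 1%:M)) ^+ 2 <=
    4 * prob rho (Mb *t proj (phi_bx th (~~ b) x)) * prob rho (Mb *t 1%:M).
Proof.
move=> hrho hM; have [c [s [e [hcs he hphi hk]]]] := phi_cases th b x.
by rewrite hphi -hk; apply: elem_bound.
Qed.

Lemma strat_bound (th : R) n (rho : 'M[C]_(n * 2)) M :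
  density rho -> povm4 M ->
  (prob rho (1%:M *t Zm R) - cos (2 * th) * (2 * claim_prob rho M false - 1)) ^+ 2
    <= 4 * err_prob th rho M.
Proof.
move=> hrho [hpsd hsum].
have tsum : \sum_(b : bool) \sum_(x : bool) prob rho (M b x *t 1%:M) = 1.
  by rewrite -(prob1 hrho) -tens11 -hsum tens_suml prob_sum;
     apply: eq_bigr => b _; rewrite tens_suml prob_sum.
have zsum : prob rho (1%:M *t Zm R) =
    \sum_(b : bool) \sum_(x : bool) prob rho (M b x *t Zm R).
  by rewrite -hsum tens_suml prob_sum;
     apply: eq_bigr => b _; rewrite tens_suml prob_sum.
rewrite zsum /claim_prob /err_prob.
apply: (combine' (t := fun b x => prob rho (M b x *t 1%:M))
                 (z := fun b x => prob rho (M b x *t Zm R))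
                 (e := fun b x => prob rho (M b x *t proj (phi_bx th (~~ b) x)))) => //.
by move=> b x; apply: elem_bx.
Qed.

End P5.

Section P6.
Import order.Order.TTheory.
Variable R : realType.
Notation C := R[i].

Lemma sq_abs (x eps : R) : 0 <= eps -> x ^+ 2 <= 4 * eps -> `|x| <= 2 * Num.sqrt eps.
Proof.
move=> he h; have := ler_wsqrtr h; rewrite sqrtr_sqr => h'.
apply: (le_trans h'); rewrite sqrtrM; last by lra.
rewrite (_ : 4 = 2 ^+ 2); last by ring.
by rewrite sqrtr_sqr ger0_norm.
Qed.

Lemma final_ineq (k Z0 p q eps : R) : 0 < k -> 0 <= eps ->
  (Z0 - k * (2 * p - 1)) ^+ 2 <= 4 * eps ->
  (Z0 - k * (2 * q - 1)) ^+ 2 <= 4 * eps ->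
  `|p - q| <= 2 * Num.sqrt eps / k.
Proof.
move=> kp he h1 h2.
have := sq_abs he h1; have := sq_abs he h2; rewrite !ler_norml.
move=> /andP[a1 a2] /andP[b1 b2].
apply/andP; split.
- rewrite -mulNr ler_pdivrMr //; nra.
- rewrite ler_pdivlMr //; nra.
Qed.

Lemma claim_sum n (rho : 'M[C]_(n * 2)) M : density rho -> povm4 M ->
  claim_prob rho M true + claim_prob rho M false = 1.
Proof.
move=> hrho [_ hsum].
have tsum : \sum_(b : bool) \sum_(x : bool) prob rho (M b x *t 1%:M) = 1.
  by rewrite -(prob1 hrho) -tens11 -hsum tens_suml prob_sum;
     apply: eq_bigr => b _; rewrite tens_suml prob_sum.
by rewrite sum_bool in tsum.
Qed.

End P6.

Unset Implicit Arguments.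
Import order.Order.TTheory.

Theorem theorem5 (R : realType) (theta : R) :
  0 < theta -> theta <= pi / 8 ->
  forall eps : R, 0 <= eps ->
  binding theta eps (2 * Num.sqrt eps / cos (2 * theta)).
Proof.
move=> th0 th8 eps eps0 n rho M0 M1 hrho hM0 hM1 he0 he1.
have pi0 := @pi_gt0 R.
have cpos : 0 < cos (2 * theta).
  by apply: cos_gt0_pihalf; apply/andP; split; lra.
have s0 := strat_bound theta hrho hM0; have s1 := strat_bound theta hrho hM1.
have f0 : (prob rho (1%:M *t Zm R) - cos (2 * theta) * (2 * claim_prob rho M0 false - 1)) ^+ 2 <= 4 * eps.
  by apply: (le_trans s0); apply: ler_wpM2l.
have f1 : (prob rho (1%:M *t Zm R) - cos (2 * theta) * (2 * claim_prob rho M1 false - 1)) ^+ 2 <= 4 * eps.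
  by apply: (le_trans s1); apply: ler_wpM2l.
have F := final_ineq cpos eps0 f0 f1.
split; first exact: F.
have c0 := claim_sum hrho hM0; have c1 := claim_sum hrho hM1.
move: (claim_prob rho M0 true) (claim_prob rho M0 false)
  (claim_prob rho M1 true) (claim_prob rho M1 false) c0 c1 F => a b c d c0 c1.
move: (2 * Num.sqrt eps / cos (2 * theta)) => G F.
rewrite (_ : a - c = - (b - d)); last by lra.
by rewrite normrN.
Qed.
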